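(* Let $\xi\in\mathbf{Sp}_6(F)$ be the matrix with $1$'s on the diagonal and additional entries $\xi_{41}=1$ and $\xi_{63}=1$ (all other entries $0$). The double coset space $P^\circ_{(3,0)}(F)\backslash\mathbf{Sp}_6(F)/\iota(\mathbf{SL}_2\times\mathbf{Sp}_4)(F)$ consists of two elements, represented by $I_6$ and $\xi$, and: (1) $P^\circ_{(3,0)}(F)\cdot I_6$ corresponds to the isotropic subspace $\langle f_1,f_2,f_3\rangle$ and its stabilizer in $(\mathbf{SL}_2\times\mathbf{Sp}_4)(F)$ is $P^\circ_{(1,0)}(F)\times P^\circ_{(2,0)}(F)$; (2) $P^\circ_{(3,0)}(F)\cdot\xi$ corresponds to $\langle e_1+f_3,e_3+f_1,f_2\rangle$ and its stabilizer in $(\mathbf{SL}_2\times\mathbf{Sp}_4)(F)$ is $$S_\xi=\left\{\begin{pmatrix}a&b\\c&d\end{pmatrix}\times\begin{pmatrix}\alpha&&&\\&d&c&\\&b&a&\\&&&\alpha^{-1}\end{pmatrix}:\alpha\in F^\times,\ \begin{pmatrix}a&b\\c&d\end{pmatrix}\in\mathbf{SL}_2(F)\right\}\cdot(\{I_2\}\times U_{(1,2)}(F)).$$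
   Context: $F$ is a number field. $\mathbf{Sp}_{2n}=\{g:{}^tgJ_{2n}g=J_{2n}\}$, $J_{2n}=\begin{pmatrix}0&I'_n\\-I'_n&0\end{pmatrix}$, $I'_n$ antidiagonal with ones. $W_6$ has ordered basis $e_1,e_2,e_3,f_3,f_2,f_1$ (row vectors, right action); a coset $P^\circ_{(3,0)}g$ corresponds to the maximal isotropic subspace $\langle f_1,f_2,f_3\rangle g$. $P^\circ_{(n,0)}$ is the Siegel parabolic (upper block triangular with $n\times n$ blocks) of $\mathbf{Sp}_{2n}$ ($P^\circ_{(1,0)}$ is the upper triangular Borel of $\mathbf{SL}_2$), $U_{(1,2)}$ is the unipotent radical of the Klingen parabolic of $\mathbf{Sp}_4$ (stabilizer of the first basis line, Levi $\mathrm{diag}(a,r,a^{-1})$). $\iota:\mathbf{SL}_2\times\mathbf{Sp}_4\to\mathbf{Sp}_6$, $\begin{pmatrix}a&b\\c&d\end{pmatrix}\times g\mapsto\begin{pmatrix}a&&b\\&g&\\c&&d\end{pmatrix}$ (block positions: first row/column, middle $4\times4$, last row/column). *)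

(* Defs.v *)
From HB Require Import structures.
From mathcomp Require Import all_boot all_order all_algebra all_field.
Set Implicit Arguments. Unset Strict Implicit. Unset Printing Implicit Defensive.
Import GRing.Theory.
Local Open Scope ring_scope.

Section SpDefs.
Variable F : fieldType.

Definition antid (n : nat) : 'M[F]_n :=
  \matrix_(i < n, j < n) (if (i + j)%N == n.-1 then 1 else 0).

Definition Jmx (n : nat) : 'M[F]_(n + n) :=
  block_mx 0 (antid n) (- antid n) 0.

Definition inSp (n : nat) (g : 'M[F]_(n + n)) : Prop :=
  g^T *m Jmx n *m g = Jmx n.

(* Siegel parabolic P°_{(n,0)}: upper block triangular with n x n blocks *)
Definition inSiegel (n : nat) (g : 'M[F]_(n + n)) : Prop :=
  inSp g /\ dlsubmx g = 0.

Definition inSL2 (A : 'M[F]_2) : Prop := \det A = 1.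

(* P°_{(1,0)}: upper triangular Borel of SL_2 *)
Definition inBorel (A : 'M[F]_2) : Prop := inSL2 A /\ A 1 0 = 0.

(* iota : SL_2 x Sp_4 -> Sp_6, block positions first/last row-col and
   middle 4x4 block *)
Definition iota (A : 'M[F]_2) (g : 'M[F]_(2 + 2)) : 'M[F]_(3 + 3) :=
  \matrix_(i < 3 + 3, j < 3 + 3)
    if ((i == 0%N :> nat) || (i == 5%N :> nat)) &&
       ((j == 0%N :> nat) || (j == 5%N :> nat))
    then A (inord (i %/ 5)) (inord (j %/ 5))
    else if ((0 < i < 5)%N && (0 < j < 5)%N)
    then g (inord i.-1) (inord j.-1)
    else 0.

(* standard basis vectors of W_6 (row vectors); ordered basis
   e1,e2,e3,f3,f2,f1 = indices 0,1,2,3,4,5 *)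
Definition bv (k : nat) : 'rV[F]_(3 + 3) := delta_mx 0 (inord k).
Definition e1 := bv 0. Definition e2 := bv 1. Definition e3 := bv 2.
Definition f3 := bv 3. Definition f2 := bv 4. Definition f1 := bv 5.

Definition fspan : 'M[F]_(3, 3 + 3) := col_mx f1 (col_mx f2 f3).

(* the maximal isotropic subspace attached to the coset P° g :
   <f1,f2,f3> g, as a matrix whose row space is that subspace *)
Definition lagr (g : 'M[F]_(3 + 3)) : 'M[F]_(3, 3 + 3) := fspan *m g.

(* xi = I_6 + E_{41} + E_{63} (1-indexed) *)
Definition xi : 'M[F]_(3 + 3) :=
  1%:M + delta_mx (inord 3) (inord 0) + delta_mx (inord 5) (inord 2).

Definition inDC (x g : 'M[F]_(3 + 3)) : Prop :=
  exists p A h, [/\ inSiegel p, inSL2 A, inSp h & g = p *m x *m iota A h].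

(* (A,h) in SL_2 x Sp_4 stabilizes the point P° x of P°\Sp_6 under the
   right action via iota:  P° x iota(A,h) = P° x *)
Definition stabilizes (x : 'M[F]_(3 + 3)) (A : 'M[F]_2) (h : 'M[F]_(2 + 2)) : Prop :=
  exists2 p, inSiegel p & x *m iota A h = p *m x.

(* U_{(1,2)}: unipotent radical of the Klingen parabolic of Sp_4:
   symplectic matrices of the shape
   [[1,*,*,*],[0,1,0,*],[0,0,1,*],[0,0,0,1]] *)
Definition inU12 (u : 'M[F]_(2 + 2)) : Prop :=
  inSp u /\
  (forall i j : 'I_(2 + 2),
     (i == j -> u i j = 1) /\ ((j < i)%N -> u i j = 0)) /\
  u (inord 1) (inord 2) = 0.

Definition mlev (alpha : F) (A : 'M[F]_2) : 'M[F]_(2 + 2) :=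
  \matrix_(i < 2 + 2, j < 2 + 2)
    match (i : nat), (j : nat) with
    | 0, 0 => alpha
    | 1, 1 => A 1 1
    | 1, 2 => A 1 0
    | 2, 1 => A 0 1
    | 2, 2 => A 0 0
    | 3, 3 => alpha^-1
    | _, _ => 0
    end.

Definition inSxi (A : 'M[F]_2) (h : 'M[F]_(2 + 2)) : Prop :=
  exists alpha : F, exists u : 'M[F]_(2 + 2),
    [/\ alpha != 0, inSL2 A, inU12 u & h = mlev alpha A *m u].

End SpDefs.

(* Main.v *)
Require Import Defs.
From HB Require Import structures.
From mathcomp Require Import all_boot all_order all_algebra all_field.
Import GRing.Theory.
Local Open Scope ring_scope.
From mathcomp Require Import zify ring.
From Stdlib Require Import Lia.
Set Implicit Arguments. Unset Strict Implicit. Unset Printing Implicit Defensive.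

Ltac ordc i := case: i => [[|[|[|[|[|[|[|?]]]]]]] ?] //.
Ltac bigx := repeat progress (rewrite ?mxE ?big_ord_recr ?big_ord0 /=).

Section S.
Variable F : fieldType.

Lemma JmxE n (i j : 'I_(n+n)) : Jmx F n i j =
  if (i + j == (n+n).-1)%N then (if (i < n)%N then 1 else -1) else 0.
Proof.
rewrite /Jmx.
case: (split_ordP i) => i' ->; case: (split_ordP j) => j' ->;
rewrite ?block_mxEul ?block_mxEur ?block_mxEdl ?block_mxEdr !mxE /=.
all: have h1 := ltn_ord i'; have h2 := ltn_ord j'.
- case: ifP => // /eqP; lia.
- have -> : ((i' + (n + j'))%N == (n + n).-1) = ((i' + j')%N == n.-1) by apply/eqP/eqP; lia.
  by [].
- have -> : ((n + i' + j')%N == (n + n).-1) = ((i' + j')%N == n.-1) by apply/eqP/eqP; lia.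
  by case: ifP; rewrite ?oppr0.
- case: ifP => // /eqP; lia.
Qed.

Lemma JmxM n : Jmx F n = \matrix_(i,j) if (i + j == (n+n).-1)%N then (if (i < n)%N then 1 else -1) else 0.
Proof. by apply/matrixP => i j; rewrite JmxE mxE. Qed.

Definition ent m n (M : 'M[F]_(m.+1, n.+1)) (i j : nat) := M (inord i) (inord j).
Arguments ent : simpl never.
Lemma entE m n (M : 'M[F]_(m.+1, n.+1)) i j : M i j = ent M i j.
Proof. by rewrite /ent !inord_val. Qed.

Definition mkm m n (f : nat -> nat -> F) : 'M[F]_(m,n) := \matrix_(i,j) f i j.

Lemma col_mx_nat m1 m2 n (U : 'M[F]_(m1.+1, n)) (D : 'M[F]_(m2.+1, n)) i j :
  col_mx U D i j = if (i < m1.+1)%N then U (inord i) j else D (inord (i - m1.+1)) j.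
Proof.
rewrite mxE; case: splitP => k Hk /=; rewrite Hk.
  by congr (U _ j); apply/val_inj; rewrite /= inordK.
by congr (D _ j); apply/val_inj; rewrite /= addKn inordK.
Qed.

Lemma bvE k : (k < 6)%N -> bv F k = \row_j (if (j == k :> nat) then 1 else 0).
Proof.
move=> hk; apply/rowP => j; rewrite !mxE eqxx /=.
have -> : (j == inord k :> 'I_(3+3)) = (j == k :> nat) by rewrite -val_eqE /= inordK.
by case: (j == k :> nat).
Qed.

End S.
Arguments ent : simpl never.

Ltac brute := let i := fresh "i" in let j := fresh "j" in
  apply/matrixP => i j; rewrite ?JmxM; bigx;
  ordc i; ordc j; rewrite /= ?mxE /= ?div0n ?divnn /= ?entE ?inordK //=; try ring.

Section S.
Variable F : fieldType.
Local Notation J1 := (Jmx F 1).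
Local Notation J2 := (Jmx F 2).
Local Notation J3 := (Jmx F 3).

Definition P2 : 'M[F]_(3+3, 2) := \matrix_(i,j)
  if (((i == 0%N :> nat) && (j == 0%N :> nat)) || ((i == 5%N :> nat) && (j == 1%N :> nat))) then 1 else 0.
Definition P4 : 'M[F]_(3+3, 2+2) := \matrix_(i,j) if (i == j.+1 :> nat) then 1 else 0.
Definition E2 := P2^T.
Definition E4 := P4^T.

Lemma J3sq : J3 *m J3 = -1. Proof. brute. Qed.
Lemma J2sq : J2 *m J2 = -1. Proof. brute. Qed.
Lemma J1sq : J1 *m J1 = -1. Proof. brute. Qed.
Lemma E2P2 : E2 *m P2 = 1. Proof. brute. Qed.
Lemma E4P4 : E4 *m P4 = 1. Proof. brute. Qed.
Lemma E2P4 : E2 *m P4 = 0. Proof. brute. Qed.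
Lemma E4P2 : E4 *m P2 = 0. Proof. brute. Qed.
Lemma PE1 : P2 *m E2 + P4 *m E4 = 1. Proof. brute. Qed.
Lemma J3dec : J3 = P2 *m J1 *m E2 + P4 *m J2 *m E4. Proof. brute. Qed.
Lemma iotadec (A : 'M[F]_2) (h : 'M[F]_(2+2)) : Defs.iota A h = P2 *m A *m E2 + P4 *m h *m E4.
Proof. brute. Qed.

Lemma eq_inord n (i : 'I_n.+1) k : (k <= n)%N -> (i == inord k) = (i == k :> nat).
Proof. by move=> hk; rewrite -val_eqE /= inordK. Qed.

Lemma fspanE : fspan F = mkm 3 (3+3) (fun i j => if (i + j == 5)%N then 1 else 0).
Proof.
rewrite /fspan /f1 /f2 /f3 !bvE //.
apply/matrixP => i j; rewrite (@col_mx_nat _ 0 1) (@col_mx_nat _ 0 0) !mxE; ordc i; ordc j; rewrite /= ?inordK //.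
Qed.

Lemma xiE : xi F = mkm (3+3) (3+3) (fun i j => if (i == j)%N then 1 else
   if ((i == 3)%N && (j == 0)%N) || ((i == 5)%N && (j == 2)%N) then 1 else 0).
Proof.
rewrite /xi; apply/matrixP => i j; rewrite !mxE !eq_inord //.
ordc i; ordc j; rewrite -?val_eqE /=; ring.
Qed.

Lemma det2 (A : 'M[F]_2) : \det A = ent A 0 0 * ent A 1 1 - ent A 0 1 * ent A 1 0.
Proof.
rewrite (expand_det_row _ 0) !big_ord_recr big_ord0 /= /cofactor !det_mx11 !mxE /=.
rewrite !entE /bump /= ?add0n ?addn0 ?expr0 ?expr1. ring.
Qed.


Definition F2 : 'M[F]_(3,2) := \matrix_(i,j) if ((i == 0%N :> nat) && (j == 1%N :> nat)) then 1 else 0.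
Definition F4 : 'M[F]_(3,2+2) := \matrix_(i,j) if ((i == 1%N :> nat) && (j == 3%N :> nat)) || ((i == 2%N :> nat) && (j == 2%N :> nat)) then 1 else 0.
Definition C2 : 'M[F]_(3,2) := \matrix_(i,j) if ((i == 0%N :> nat) && (j == 1%N :> nat)) || ((i == 2%N :> nat) && (j == 0%N :> nat)) then 1 else 0.
Definition C4 : 'M[F]_(3,2+2) := \matrix_(i,j) if ((i == 0%N :> nat) && (j == 1%N :> nat)) || ((i == 1%N :> nat) && (j == 3%N :> nat)) || ((i == 2%N :> nat) && (j == 2%N :> nat)) then 1 else 0.

Lemma fspan_dec : fspan F = F2 *m E2 + F4 *m E4.
Proof. rewrite fspanE /mkm; brute. Qed.
Lemma fxi_dec : fspan F *m xi F = C2 *m E2 + C4 *m E4.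
Proof. rewrite fspanE xiE /mkm; brute. Qed.
Lemma fspan_iso : fspan F *m J3 *m (fspan F)^T = 0.
Proof. rewrite fspanE /mkm; brute. Qed.
Lemma fspan_rf : fspan F *m (fspan F)^T = 1.
Proof. rewrite fspanE /mkm; brute. Qed.
Lemma xi_Sp : (xi F)^T *m J3 *m xi F = J3.
Proof. rewrite xiE /mkm; brute. Qed.
Lemma SL2J (A : 'M[F]_2) : A^T *m J1 *m A = \det A *: J1.
Proof. rewrite det2; brute. Qed.
Lemma SL2J' (A : 'M[F]_2) : A *m J1 *m A^T = \det A *: J1.
Proof. rewrite det2; brute. Qed.
Lemma alt2 (v : 'rV[F]_2) : v *m J1 *m v^T = 0.
Proof. brute. Qed.

End S.

Section S.
Variable F : fieldType.
Local Notation J1 := (Jmx F 1).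
Local Notation J2 := (Jmx F 2).
Local Notation J3 := (Jmx F 3).

Definition fm (u v : 'rV[F]_(2+2)) : F := (u *m J2 *m v^T) 0 0.

Lemma fm_alt v : fm v v = 0.
Proof. rewrite /fm JmxM; bigx; rewrite ?entE /=; ring. Qed.
Lemma fm_anti u v : fm u v = - fm v u.
Proof. rewrite /fm JmxM; bigx; rewrite ?entE /=; ring. Qed.
Lemma fmDZl a u v w : fm (a *: u + v) w = a * fm u w + fm v w.
Proof. rewrite /fm JmxM; bigx; rewrite ?entE /=; ring. Qed.
Lemma fmDZr a u v w : fm w (a *: u + v) = a * fm w u + fm w v.
Proof. rewrite /fm JmxM; bigx; rewrite ?entE /=; ring. Qed.

Lemma gram_entry k l (N : 'M[F]_(k, 2+2)) (Q : 'M[F]_(l, 2+2)) i j :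
  (N *m J2 *m Q^T) i j = fm (row i N) (row j Q).
Proof.
rewrite /fm !mxE; apply: eq_bigr => a _; rewrite !mxE; congr (_ * _).
by apply: eq_bigr => b _; rewrite !mxE.
Qed.

End S.

Section S.
Variable F : fieldType.
Local Notation J1 := (Jmx F 1).
Local Notation J2 := (Jmx F 2).
Local Notation J3 := (Jmx F 3).

Lemma swapJ n (J X Y : 'M[F]_n) : J *m J = -1 -> X *m J *m Y = J -> Y *m J *m X = J.
Proof.
move=> JJ XJY.
have h1 : X *m (J *m Y *m (-J)) = 1.
  by rewrite !mulmxA XJY mulmxN JJ opprK.
have h2 := mulmx1C h1.
have e : J *m Y *m J *m X = -1.
  by apply: oppr_inj; rewrite opprK -mulNmx -mulmxN; exact: h2.
have := congr1 (mulmx J) e.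
rewrite !mulmxA JJ !mulNmx mul1mx mulmxN mulmx1 => /oppr_inj.
by rewrite -!mulmxA.
Qed.

Lemma Sp_row n (g : 'M[F]_(n+n)) : Jmx F n *m Jmx F n = -1 ->
  inSp g <-> g *m Jmx F n *m g^T = Jmx F n.
Proof.
move=> JJ; rewrite /inSp; split => h.
  by apply: (swapJ JJ).
by apply: (swapJ JJ).
Qed.

Lemma Sp_unit n (g : 'M[F]_(n+n)) : Jmx F n *m Jmx F n = -1 -> inSp g -> g \in unitmx.
Proof.
move=> JJ h.
have : g^T *m (Jmx F n *m g *m (- Jmx F n)) = 1.
  by rewrite !mulmxA h mulmxN JJ opprK.
by case/mulmx1_unit => _; rewrite !unitmx_mul; case/andP => /andP [].
Qed.

Lemma Sp_mul n (g h : 'M[F]_(n+n)) : inSp g -> inSp h -> inSp (g *m h).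
Proof.
rewrite /inSp => hg hh.
by rewrite trmx_mul !mulmxA -(mulmxA _ g^T) -(mulmxA _ (g^T *m _)) hg.
Qed.

Lemma Sp_inv n (g : 'M[F]_(n+n)) : Jmx F n *m Jmx F n = -1 -> inSp g -> inSp (invmx g).
Proof.
move=> JJ hg; have u := Sp_unit JJ hg.
rewrite /inSp -{1}hg !mulmxA -trmx_mul mulmxV // trmx1 mul1mx.
by rewrite -mulmxA mulmxV // mulmx1.
Qed.


Definition bd (X : 'M[F]_2) (Y : 'M[F]_(2+2)) := P2 F *m X *m E2 F + P4 F *m Y *m E4 F.

Lemma mE2P2 k (M : 'M[F]_(k,2)) : M *m E2 F *m P2 F = M.
Proof. by rewrite -mulmxA E2P2 mulmx1. Qed.
Lemma mE4P4 k (M : 'M[F]_(k,2+2)) : M *m E4 F *m P4 F = M.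
Proof. by rewrite -mulmxA E4P4 mulmx1. Qed.
Lemma mE2P4 k (M : 'M[F]_(k,2)) : M *m E2 F *m P4 F = 0.
Proof. by rewrite -mulmxA E2P4 mulmx0. Qed.
Lemma mE4P2 k (M : 'M[F]_(k,2+2)) : M *m E4 F *m P2 F = 0.
Proof. by rewrite -mulmxA E4P2 mulmx0. Qed.

Lemma bd_mul X Y X' Y' : bd X Y *m bd X' Y' = bd (X *m X') (Y *m Y').
Proof.
rewrite /bd mulmxDl !mulmxDr !mulmxA !(mE2P2, mE2P4, mE4P2, mE4P4) !mul0mx addr0 add0r.
done.
Qed.

Lemma trE2 : (E2 F)^T = P2 F. Proof. by rewrite /E2 trmxK. Qed.
Lemma trE4 : (E4 F)^T = P4 F. Proof. by rewrite /E4 trmxK. Qed.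

Lemma bd_tr X Y : (bd X Y)^T = bd X^T Y^T.
Proof.
by rewrite /bd linearD /= !trmx_mul !trE2 !trE4 !mulmxA.
Qed.

Lemma iota_bd (A : 'M[F]_2) (h : 'M[F]_(2+2)) : Defs.iota A h = bd A h.
Proof. exact: iotadec. Qed.
Lemma J3_bd : J3 = bd J1 J2.
Proof. exact: J3dec. Qed.

Lemma formdec k l (X : 'M[F]_(k, 3+3)) (Y : 'M[F]_(l, 3+3)) :
  X *m J3 *m Y^T = (X *m P2 F) *m J1 *m (Y *m P2 F)^T + (X *m P4 F) *m J2 *m (Y *m P4 F)^T.
Proof.
rewrite J3_bd /bd !trmx_mul /E2 /E4 mulmxDr mulmxDl !mulmxA.
by rewrite /E2 /E4.
Qed.

Lemma Sp_iota (A : 'M[F]_2) (h : 'M[F]_(2+2)) : inSL2 A -> inSp h -> inSp (Defs.iota A h).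
Proof.
rewrite /inSL2 /inSp => dA hh.
rewrite iota_bd bd_tr J3_bd !bd_mul SL2J dA scale1r hh.
by [].
Qed.

Lemma J3J3 : J3 *m J3 = -1. Proof. exact: J3sq. Qed.
Lemma J2J2 : J2 *m J2 = -1. Proof. exact: J2sq. Qed.

End S.

Section S.
Variable F : fieldType.
Local Notation J1 := (Jmx F 1).
Local Notation J2 := (Jmx F 2).
Local Notation J3 := (Jmx F 3).

Lemma antid_sq : antid F 3 *m antid F 3 = 1%:M.
Proof. brute. Qed.

Lemma fspan_row : fspan F = row_mx 0 (antid F 3).
Proof.
apply/matrixP => i j; rewrite fspanE mxE; case: (split_ordP j) => j' ->;
 rewrite ?row_mxEl ?row_mxEr !mxE; ordc i; ordc j'.
Qed.

Lemma sub_fspan k (X : 'M[F]_(k, 3+3)) : (X <= fspan F)%MS <-> lsubmx X = 0.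
Proof.
rewrite fspan_row; split.
  by case/submxP => D ->; rewrite mul_mx_row row_mxKl mulmx0.
move=> h; apply/submxP; exists (rsubmx X *m antid F 3).
by rewrite mul_mx_row mulmx0 -mulmxA antid_sq mulmx1 -h hsubmxK.
Qed.

Lemma siegel_crit (p : 'M[F]_(3+3)) : dlsubmx p = 0 <-> (fspan F *m p <= fspan F)%MS.
Proof.
rewrite sub_fspan fspan_row -{2}[p]submxK mul_row_block row_mxKl mul0mx add0r.
split => [->|h]; first by rewrite mulmx0.
by rewrite -[dlsubmx p]mul1mx -antid_sq -mulmxA h mulmx0.
Qed.

Lemma basis_ex m n (N : 'M[F]_(m, n)) r : \rank N = r -> exists B : 'M[F]_(r, n), (B :=: N)%MS.
Proof. by move=> <-; exists (row_base N); exact: eq_row_base. Qed.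

Lemma solve_ex m n k (K : 'M[F]_(m, n)) (Bv : 'M[F]_(k, n)) : row_full K -> exists X, X *m K = Bv.
Proof. by move=> fK; exists (Bv *m pinvmx K); rewrite mulmxKpV // submx_full. Qed.

Lemma nzrow m n (M : 'M[F]_(m, n)) : M != 0 -> exists i, row i M != 0.
Proof.
move=> nz; apply/existsP; apply: contraR nz; rewrite negb_exists => /forallP h.
by apply/eqP/row_matrixP => i; rewrite row0; apply/eqP; have := h i; rewrite negbK.
Qed.

Lemma isorank n k l (J : 'M[F]_n) (N : 'M[F]_(k, n)) (Q : 'M[F]_(l, n)) :
  J \in unitmx -> N *m J *m Q^T = 0 -> (\rank N + \rank Q <= n)%N.
Proof.
move=> uJ h.
have sub : (N <= kermx (J *m Q^T))%MS by apply/sub_kermxP; rewrite mulmxA.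
have r1 := mxrankS sub; rewrite mxrank_ker in r1.
have r2 : \rank (J *m Q^T) = \rank Q.
  rewrite -mxrank_tr trmx_mul trmxK mxrankMfree //.
  by rewrite row_free_unit unitmx_tr.
rewrite r2 in r1. have r3 := rank_leq_col Q. lia.
Qed.

Lemma unitJ n : Jmx F n *m Jmx F n = -1 -> Jmx F n \in unitmx.
Proof.
move=> JJ; have : Jmx F n *m (- Jmx F n) = 1 by rewrite mulmxN JJ opprK.
by case/mulmx1_unit.
Qed.

End S.

Section S.
Variable F : fieldType.
Local Notation J1 := (Jmx F 1).
Local Notation J2 := (Jmx F 2).
Local Notation J3 := (Jmx F 3).

Lemma DC (x g : 'M[F]_(3+3)) (A : 'M[F]_2) (h : 'M[F]_(2+2)) :
  inSp x -> inSp g -> inSL2 A -> inSp h ->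
  (fspan F *m g <= fspan F *m x *m Defs.iota A h)%MS -> inDC x g.
Proof.
move=> hx hg hA hh sub.
set q := x *m Defs.iota A h.
have hq : inSp q := Sp_mul hx (Sp_iota hA hh).
have uq := Sp_unit (J3J3 F) hq.
exists (g *m invmx q), A, h; split => //.
- split; first exact: Sp_mul hg (Sp_inv (J3J3 F) hq).
  apply/siegel_crit; case/submxP: sub => D hD.
  rewrite mulmxA hD -(mulmxA (fspan F) x) -/q -mulmxA -(mulmxA (fspan F)) mulmxV // mulmx1.
  exact: submxMl.
- by rewrite -mulmxA -/q mulmxKV.
Qed.

Lemma rankJQ n l (J : 'M[F]_n) (Q : 'M[F]_(l, n)) : J \in unitmx -> \rank (J *m Q^T) = \rank Q.
Proof.
move=> uJ; rewrite -mxrank_tr trmx_mul trmxK mxrankMfree //.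
by rewrite row_free_unit unitmx_tr.
Qed.

Lemma row_rV n (v : 'rV[F]_n) (i : 'I_1) : row i v = v.
Proof. by apply/rowP => k; rewrite mxE (ord1 i). Qed.

Definition mkH (h0 h1 h2 h3 : 'rV[F]_(2+2)) : 'M[F]_(2+2) :=
  \matrix_(i, j) if (i == 0%N :> nat) then h0 0 j else if (i == 1%N :> nat) then h1 0 j
     else if (i == 2%N :> nat) then h2 0 j else h3 0 j.

Lemma row_mkH h0 h1 h2 h3 (i : 'I_(2+2)) : row i (mkH h0 h1 h2 h3) =
  if (i == 0%N :> nat) then h0 else if (i == 1%N :> nat) then h1
     else if (i == 2%N :> nat) then h2 else h3.
Proof.
apply/rowP => k; rewrite !mxE.
by case: ifP => _; [|case: ifP => _; [|case: ifP => _]].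
Qed.

Lemma sp4_complete (h1 h2 h3 : 'rV[F]_(2+2)) : h3 != 0 ->
  fm h1 h2 = 1 -> fm h1 h3 = 0 -> fm h2 h3 = 0 ->
  exists h0, inSp (mkH h0 h1 h2 h3).
Proof.
move=> nz3 f12 f13 f23.
have uJ := unitJ (J2J2 F).
have fK : row_full (J2 *m h3^T).
  by rewrite /row_full rankJQ // rank_rV nz3.
have [u hu] := solve_ex (1%:M : 'M[F]_1) fK.
have fu3 : fm u h3 = 1.
  by rewrite /fm -mulmxA hu mxE.
pose h0 := (fm u h1) *: h2 + ((- fm u h2) *: h1 + u).
exists h0.
have f01 : fm h0 h1 = 0.
  rewrite /h0 !fmDZl fm_alt (fm_anti h2 h1) f12; ring.
have f02 : fm h0 h2 = 0.
  rewrite /h0 !fmDZl fm_alt f12; ring.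
have f03 : fm h0 h3 = 1.
  rewrite /h0 !fmDZl f23 f13 fu3; ring.
have f10 : fm h1 h0 = 0 by rewrite fm_anti f01 oppr0.
have f20 : fm h2 h0 = 0 by rewrite fm_anti f02 oppr0.
have f30 : fm h3 h0 = -1 by rewrite fm_anti f03.
have f21 : fm h2 h1 = -1 by rewrite fm_anti f12.
have f31 : fm h3 h1 = 0 by rewrite fm_anti f13 oppr0.
have f32 : fm h3 h2 = 0 by rewrite fm_anti f23 oppr0.
apply/(Sp_row _ (J2J2 F)).
apply/matrixP => i j; rewrite gram_entry !row_mkH JmxE.
ordc i; ordc j; rewrite /= ?fm_alt ?f01 ?f02 ?f03 ?f10 ?f20 ?f30 ?f12 ?f21 ?f31 ?f13 ?f23 ?f32 //.
Qed.

End S.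

Section S.
Variable F : fieldType.
Local Notation J1 := (Jmx F 1).
Local Notation J2 := (Jmx F 2).
Local Notation J3 := (Jmx F 3).

Definition e0 : 'M[F]_(1,3) := \matrix_(i,j) if (j == 0%N :> nat) then 1 else 0.
Definition Sw : 'M[F]_(2,3) := \matrix_(i,j) if ((i == 0%N :> nat) && (j == 2%N :> nat)) || ((i == 1%N :> nat) && (j == 1%N :> nat)) then 1 else 0.
Definition S24 : 'M[F]_(2,2+2) := \matrix_(i,j) if (j == (i + 2)%N :> nat) then 1 else 0.
Definition r01 : 'M[F]_(1,2) := \matrix_(i,j) if (j == 1%N :> nat) then 1 else 0.
Definition r10 : 'M[F]_(1,2) := \matrix_(i,j) if (j == 0%N :> nat) then 1 else 0.
Definition Sxy : 'M[F]_(2,3) := \matrix_(i,j) if ((i == 0%N :> nat) && (j == 2%N :> nat)) || ((i == 1%N :> nat) && (j == 0%N :> nat)) then 1 else 0.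
Definition Sy4 : 'M[F]_(2,2+2) := \matrix_(i,j) if ((i == 0%N :> nat) && (j == 2%N :> nat)) || ((i == 1%N :> nat) && (j == 1%N :> nat)) then 1 else 0.
Definition sel3 : 'M[F]_(1,3) := \matrix_(i,j) if (j == 1%N :> nat) then 1 else 0.
Definition r3 : 'M[F]_(1,2+2) := \matrix_(i,j) if (j == 3%N :> nat) then 1 else 0.

Lemma e0F2 : e0 *m F2 F = r01. Proof. brute. Qed.
Lemma e0F4 : e0 *m F4 F = 0. Proof. brute. Qed.
Lemma SwF2 : Sw *m F2 F = 0. Proof. brute. Qed.
Lemma SwF4 : Sw *m F4 F = S24. Proof. brute. Qed.
Lemma SxyC2 : Sxy *m C2 F = 1%:M. Proof. brute. Qed.
Lemma SxyC4 : Sxy *m C4 F = Sy4. Proof. brute. Qed.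
Lemma sel3C2 : sel3 *m C2 F = 0. Proof. brute. Qed.
Lemma sel3C4 : sel3 *m C4 F = r3. Proof. brute. Qed.

Lemma S24H h0 h1 h2 h3 : S24 *m mkH h0 h1 h2 h3 = \matrix_(i,j) if (i == 0%N :> nat) then h2 0 j else h3 0 j.
Proof. brute. Qed.
Lemma Sy4H h0 h1 h2 h3 : Sy4 *m mkH h0 h1 h2 h3 = \matrix_(i,j) if (i == 0%N :> nat) then h2 0 j else h1 0 j.
Proof. brute. Qed.
Lemma r3H h0 h1 h2 h3 : r3 *m mkH h0 h1 h2 h3 = h3.
Proof. brute. Qed.

Lemma rows2 (B : 'M[F]_(2, 2+2)) : (\matrix_(i,j) if (i == 0%N :> nat) then row 0 B 0 j else row ord_max B 0 j) = B.
Proof. by apply/matrixP => i j; rewrite !mxE; ordc i; rewrite /= ?entE. Qed.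

Lemma SL2_row (w : 'rV[F]_2) : w != 0 -> exists A : 'M[F]_2, \det A = 1 /\ r01 *m A = w.
Proof.
move=> nz.
have [d0|dn0] := eqVneq (ent w 0 1) 0.
- have c0 : ent w 0 0 != 0.
    apply/negP => /eqP c0; move/negP: nz; apply; apply/eqP/rowP => j; rewrite mxE entE.
    by ordc j; rewrite /= ?c0 ?d0.
  exists (\matrix_(i,j) if (i == 0%N :> nat) then (if (j == 0%N :> nat) then 0 else - (ent w 0 0)^-1) else
          (if (j == 0%N :> nat) then ent w 0 0 else ent w 0 1)).
  split.
    rewrite det2 /ent !mxE !inordK //= -/(ent w 0 0) -/(ent w 0 1) d0. by rewrite mulr0 add0r mulNr mulVf // opprK.
  apply/rowP => j; rewrite /r01; bigx; ordc j; rewrite /= ?entE ?inordK //=; ring.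
- exists (\matrix_(i,j) if (i == 0%N :> nat) then (if (j == 0%N :> nat) then (ent w 0 1)^-1 else 0) else
          (if (j == 0%N :> nat) then ent w 0 0 else ent w 0 1)).
  split.
    rewrite det2 /ent !mxE !inordK //= -/(ent w 0 0) -/(ent w 0 1). by rewrite mul0r subr0 mulVf.
  apply/rowP => j; rewrite /r01; bigx; ordc j; rewrite /= ?entE ?inordK //=; ring.
Qed.

Lemma fs_iota (A : 'M[F]_2) (h : 'M[F]_(2+2)) :
  fspan F *m Defs.iota A h = F2 F *m A *m E2 F + F4 F *m h *m E4 F.
Proof.
rewrite fspan_dec iota_bd /bd mulmxDl !mulmxDr !mulmxA !(mE2P2, mE2P4, mE4P2, mE4P4) !mul0mx addr0 add0r.
done.
Qed.

Lemma fsxi_iota (A : 'M[F]_2) (h : 'M[F]_(2+2)) :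
  fspan F *m xi F *m Defs.iota A h = C2 F *m A *m E2 F + C4 F *m h *m E4 F.
Proof.
rewrite fxi_dec iota_bd /bd mulmxDl !mulmxDr !mulmxA !(mE2P2, mE2P4, mE4P2, mE4P4) !mul0mx addr0 add0r.
done.
Qed.

Lemma caseII_eq k (Y : 'M[F]_(k,2)) (Z : 'M[F]_(k,1)) (H : 'M[F]_(2+2)) (H2 : 'M[F]_(2,2+2)) (w : 'rV[F]_(2+2)) :
  Sy4 *m H = H2 -> r3 *m H = w ->
  (Y *m Sxy + Z *m sel3) *m (C2 F *m E2 F + C4 F *m H *m E4 F) = Y *m (E2 F + H2 *m E4 F) + Z *m (w *m E4 F).
Proof.
move=> h1 h2.
have a1 : Y *m Sxy *m C2 F = Y by rewrite -mulmxA SxyC2 mulmx1.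
have a2 : Y *m Sxy *m C4 F *m H = Y *m H2 by rewrite -(mulmxA Y) SxyC4 -mulmxA h1.
have a3 : Z *m sel3 *m C2 F = 0 by rewrite -mulmxA sel3C2 mulmx0.
have a4 : Z *m sel3 *m C4 F *m H = Z *m w by rewrite -(mulmxA Z) sel3C4 -mulmxA h2.
by rewrite mulmxDl !mulmxDr !mulmxA a1 a2 a3 a4 mul0mx add0r.
Qed.

Lemma caseI_eq k (T : 'M[F]_(k,1)) (Z : 'M[F]_(k,2)) (A : 'M[F]_2) (H : 'M[F]_(2+2)) (B : 'M[F]_(2,2+2)) (v : 'rV[F]_2) :
  r01 *m A = v -> S24 *m H = B ->
  (T *m e0 + Z *m Sw) *m (F2 F *m A *m E2 F + F4 F *m H *m E4 F) = T *m (v *m E2 F) + Z *m (B *m E4 F).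
Proof.
move=> h1 h2.
have a1 : T *m e0 *m F2 F *m A = T *m v by rewrite -(mulmxA T) e0F2 -mulmxA h1.
have a2 : T *m e0 *m F4 F = 0 by rewrite -mulmxA e0F4 mulmx0.
have a3 : Z *m Sw *m F2 F = 0 by rewrite -mulmxA SwF2 mulmx0.
have a4 : Z *m Sw *m F4 F *m H = Z *m B by rewrite -(mulmxA Z) SwF4 -mulmxA h2.
by rewrite mulmxDl !mulmxDr !mulmxA a1 a2 a3 a4 !mul0mx addr0 add0r.
Qed.

End S.

Section S.
Variable F : fieldType.
Local Notation J1 := (Jmx F 1).
Local Notation J2 := (Jmx F 2).
Local Notation J3 := (Jmx F 3).

Lemma rf_fspan : row_free (fspan F).
Proof.
have := mxrankM_maxl (fspan F) (fspan F)^T; rewrite fspan_rf mxrank1 => h.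
by rewrite /row_free eqn_leq rank_leq_row h.
Qed.

Lemma rf_E4 : row_free (E4 F).
Proof.
have := mxrankM_maxl (E4 F) (P4 F); rewrite E4P4 mxrank1 => h.
by rewrite /row_free eqn_leq rank_leq_row h.
Qed.

Lemma Sp1 : inSp (1%:M : 'M[F]_(3+3)).
Proof. by rewrite /inSp trmx1 mul1mx mulmx1. Qed.

Lemma dc_main (g : 'M[F]_(3+3)) : inSp g -> inDC 1%:M g \/ inDC (xi F) g.
Proof.
move=> hg.
have ug := Sp_unit (J3J3 F) hg.
have gJg : g *m J3 *m g^T = J3 by apply/(Sp_row _ (J3J3 F)).
set M := fspan F *m g.
have rfM : row_free M by rewrite /row_free /M mxrankMfree ?row_free_unit //; exact: rf_fspan.
have rM : \rank M = 3 by apply/eqP.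
have isoM : M *m J3 *m M^T = 0.
  have -> : M *m J3 *m M^T = fspan F *m (g *m J3 *m g^T) *m (fspan F)^T by rewrite /M trmx_mul !mulmxA.
  by rewrite gJg fspan_iso.
have isoYZ : forall k l (Y : 'M[F]_(k,3)) (Z : 'M[F]_(l,3)), Y *m M *m J3 *m (Z *m M)^T = 0.
  move=> k l Y Z.
  have -> : Y *m M *m J3 *m (Z *m M)^T = Y *m (M *m J3 *m M^T) *m Z^T by rewrite trmx_mul !mulmxA.
  by rewrite isoM mulmx0 mul0mx.
set M2 := M *m P2 F.
set M4 := M *m P4 F.
have Mdec : M = M2 *m E2 F + M4 *m E4 F.
  by rewrite /M2 /M4 -[M *m P2 F *m E2 F]mulmxA -[M *m P4 F *m E4 F]mulmxA -mulmxDr PE1 mulmx1.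
have formYZ : forall k l (Y : 'M[F]_(k,3)) (Z : 'M[F]_(l,3)),
    Y *m M2 *m J1 *m (Z *m M2)^T + Y *m M4 *m J2 *m (Z *m M4)^T = 0.
  move=> k l Y Z; rewrite -(isoYZ _ _ Y Z) formdec /M2 /M4 !mulmxA //.
have eM2 : M2 = M *m P2 F by [].
have eM4 : M4 = M *m P4 F by [].
clearbody M2 M4.
case: (boolP (row_free M4)) => rf4.
-
  right.
  set K := kermx M2.
  have KM2 : K *m M2 = 0 := mulmx_ker M2.
  have iso' : M4 *m J2 *m (K *m M4)^T = 0.
    by have := formYZ _ _ 1%:M K; rewrite !mul1mx KM2 trmx0 mulmx0 add0r.
  have r1 := isorank (unitJ (J2J2 F)) iso'.
  have KM : K *m M = K *m M4 *m E4 F.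
    by rewrite {1}Mdec mulmxDr mulmxA KM2 mul0mx add0r mulmxA.
  have rKM4 : \rank (K *m M4) = \rank K.
    by rewrite -(mxrankMfree _ rf_E4) -KM mxrankMfree.
  have rK := mxrank_ker M2.
  have rM4 : \rank M4 = 3 by apply/eqP.
  have rM2 := rank_leq_col M2.
  have fM2 : row_full M2 by rewrite /row_full; apply/eqP; rewrite -/K in rK; lia.
  have [X XM2] := solve_ex (1%:M : 'M[F]_2) fM2.
  have rK1 : \rank K = 1%N by rewrite -/K in rK; lia.
  have [x hx] := basis_ex rK1.
  have xK : (x <= K)%MS by rewrite hx.
  have xM2 : x *m M2 = 0 by apply/sub_kermxP.
  have xM : x *m M = x *m M4 *m E4 F.
    by rewrite {1}Mdec mulmxDr mulmxA xM2 mul0mx add0r mulmxA.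
  have x0 : x != 0.
    apply/eqP => x0; have : \rank x = 1%N by rewrite hx.
    by rewrite x0 mxrank0.
  set w := x *m M4.
  have w0 : w != 0.
    apply/eqP => w0; move/eqP: x0; apply.
    by apply/eqP; rewrite -(mulmx_free_eq0 _ rfM) xM -/w w0 mul0mx.
  set H' := X *m M4.
  have G1 : H' *m J2 *m H'^T = - J1.
    apply/eqP; rewrite -addr_eq0 addrC; apply/eqP.
    by have := formYZ _ _ X X; rewrite XM2 trmx1 mul1mx mulmx1.
  have G2 : H' *m J2 *m w^T = 0.
    by have := formYZ _ _ X x; rewrite xM2 trmx0 mulmx0 add0r.
  set h1 := row ord_max H'.
  set h2 := row 0 H'.
  have f12 : fm h1 h2 = 1.
    have := congr1 (fun N : 'M[F]_2 => N ord_max 0) G1; rewrite /= gram_entry JmxM !mxE /= opprK //.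
  have f13 : fm h1 w = 0.
    have := congr1 (fun N : 'M[F]_(2,1) => N ord_max 0) G2; rewrite /= gram_entry row_rV mxE //.
  have f23 : fm h2 w = 0.
    have := congr1 (fun N : 'M[F]_(2,1) => N 0 0) G2; rewrite /= gram_entry row_rV mxE //.
  have [h0 Hsp] := sp4_complete w0 f12 f13 f23.
  apply: (DC (x := xi F) (A := 1%:M) (h := mkH h0 h1 h2 w)) => //.
  - exact: xi_Sp.
  - by rewrite /inSL2 det1.
  have Zex : (1%:M - M2 *m X <= x)%MS.
    rewrite hx; apply/sub_kermxP.
    by rewrite mulmxBl mul1mx -mulmxA XM2 mulmx1 subrr.
  case/submxP: Zex => Z hZ.
  have XM : X *m M = E2 F + H' *m E4 F.
    by rewrite {1}Mdec mulmxDr mulmxA XM2 mul1mx mulmxA.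
  have eM : M = M2 *m (X *m M) + Z *m (x *m M).
    by rewrite (mulmxA M2) (mulmxA Z) -hZ -mulmxDl addrC subrK mul1mx.
  apply/submxP; exists (M2 *m Sxy F + Z *m sel3 F).
  rewrite fsxi_iota mulmx1 (caseII_eq M2 Z (Sy4H _ _ _ _) (r3H _ _ _ _)).
  by rewrite /h1 /h2 rows2 -XM -/w -xM -eM.
- left.
  have kn0 : kermx M4 != 0.
    rewrite -mxrank_eq0 mxrank_ker subn_eq0 -ltnNge ltn_neqAle rank_leq_row andbT.
    exact: rf4.
  have [i0 hi0] := nzrow kn0.
  set x := row i0 (kermx M4).
  have xM4 : x *m M4 = 0 by apply/sub_kermxP; exact: row_sub.
  set v2 := x *m M2.
  have xM : x *m M = v2 *m E2 F.
    by rewrite {1}Mdec mulmxDr (mulmxA x M4) xM4 mul0mx addr0 mulmxA.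
  have v0 : v2 != 0.
    apply/eqP => v0; move/eqP: hi0; apply; apply/eqP.
    by rewrite -(mulmx_free_eq0 _ rfM) -/x xM v0 mul0mx.
  have [A [dA rA]] := SL2_row v0.
  have e1 : M2 *m J1 *m v2^T = 0.
    by have := formYZ _ _ 1%:M x; rewrite !mul1mx xM4 trmx0 mulmx0 addr0.
  set Kv := kermx (J1 *m v2^T).
  have M2K : (M2 <= Kv)%MS by apply/sub_kermxP; rewrite mulmxA.
  have v2K : (v2 <= Kv)%MS by apply/sub_kermxP; rewrite mulmxA alt2.
  have rKv : \rank Kv = 1%N.
    by rewrite mxrank_ker rankJQ ?(unitJ (J1sq F)) // rank_rV v0.
  have Kvv : (Kv <= v2)%MS.
    by rewrite -(mxrank_leqif_sup v2K).2 rKv rank_rV v0.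
  have [T hT] : exists T, M2 = T *m v2 by apply/submxP; exact: submx_trans M2K Kvv.
  have M4E4 : M4 *m E4 F = (1%:M - T *m x) *m M.
    rewrite mulmxBl mul1mx -mulmxA xM mulmxA -hT.
    by rewrite {1}Mdec (addrC (M2 *m E2 F)) addrK.
  have iso4 : M4 *m J2 *m M4^T = 0.
    have := isoYZ _ _ (1%:M - T *m x) (1%:M - T *m x).
    by rewrite formdec -M4E4 !mE4P2 !mE4P4 !mul0mx add0r.
  have rle2 := isorank (unitJ (J2J2 F)) iso4.
  have rge : (\rank M <= 1 + \rank M4)%N.
    rewrite {1}Mdec hT.
    apply: leq_trans (mxrank_add _ _) _.
    apply: leq_add; last exact: mxrankM_maxl.
    apply: leq_trans (mxrankM_maxl _ _) _; apply: leq_trans (mxrankM_maxl _ _) _.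
    exact: rank_leq_col.
  have r2 : \rank M4 = 2%N by lia.
  have [B hB] := basis_ex r2.
  have rfB : row_free B by rewrite /row_free hB r2.
  have [Z hZ] : exists Z, M4 = Z *m B by apply/submxP; rewrite hB.
  have [Yb hYb] : exists Yb, B = Yb *m M4 by apply/submxP; rewrite -hB.
  have isoB : B *m J2 *m B^T = 0.
    have -> : B *m J2 *m B^T = Yb *m (M4 *m J2 *m M4^T) *m Yb^T by rewrite hYb trmx_mul !mulmxA.
    by rewrite iso4 mulmx0 mul0mx.
  set h2 := row 0 B.
  set h3 := row ord_max B.
  have h3n0 : h3 != 0.
    rewrite /h3 rowE mulmx_free_eq0 //.
    apply/negP => /eqP/matrixP/(_ 0 ord_max); rewrite !mxE !eqxx /= => /eqP.
    by rewrite oner_eq0.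
  have f23 : fm h2 h3 = 0.
    by have := congr1 (fun N : 'M[F]_2 => N 0 ord_max) isoB; rewrite /= gram_entry mxE.
  have fK : row_full (J2 *m B^T) by rewrite /row_full rankJQ ?(unitJ (J2J2 F)).
  have [u hu] := solve_ex (r10 F) fK.
  rewrite mulmxA in hu.
  have fu2 : fm u h2 = 1.
    by have := congr1 (fun N : 'M[F]_(1,2) => N 0 0) hu; rewrite /= gram_entry row_rV mxE.
  have fu3 : fm u h3 = 0.
    by have := congr1 (fun N : 'M[F]_(1,2) => N 0 ord_max) hu; rewrite /= gram_entry row_rV mxE.
  have [h0 Hsp] := sp4_complete h3n0 fu2 fu3 f23.
  apply: (DC (x := 1%:M) (A := A) (h := mkH h0 u h2 h3)) => //.
  - exact: Sp1.
  apply/submxP; exists (T *m e0 F + Z *m Sw F).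
  rewrite mulmx1 fs_iota (caseI_eq T Z rA (S24H _ _ _ _)).
  by rewrite /h2 /h3 rows2 mulmxA -hT mulmxA -hZ -Mdec.
Qed.

End S.

Section S.
Variable F : fieldType.
Local Notation J1 := (Jmx F 1).
Local Notation J2 := (Jmx F 2).
Local Notation J3 := (Jmx F 3).

Definition c0 : 'M[F]_(3,1) := \matrix_(i,j) if (i == 0%N :> nat) then 1 else 0.
Lemma F2c0 : F2 F = c0 *m r01 F. Proof. brute. Qed.

Lemma not_dc1xi : ~ inDC 1%:M (xi F).
Proof.
case=> p [A [h [[Sp_p dl_p] hA hh e]]].
have := siegel_crit p; case => /(_ dl_p) sub _.
case/submxP: sub => D hD.
have e2 : fspan F *m xi F *m P2 F = D *m F2 F *m A.
  rewrite e mulmx1 !mulmxA hD -(mulmxA D) fs_iota mulmxDr mulmxDl !mulmxA.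
  by rewrite mE2P2 mE4P2 addr0.
rewrite fxi_dec mulmxDl mE2P2 mE4P2 addr0 in e2.
have r1 : (\rank (C2 F) <= 1)%N.
  rewrite e2 F2c0; apply: leq_trans (mxrankM_maxl _ _) _.
  apply: leq_trans (mxrankM_maxr _ _) _.
  apply: leq_trans (mxrankM_maxl _ _) _; exact: rank_leq_col.
have r2 : (2 <= \rank (C2 F))%N.
  have := mxrankM_maxr (Sxy F) (C2 F); rewrite SxyC2 mxrank1 //.
lia.
Qed.

Lemma lagr1 : (lagr (1%:M : 'M[F]_(3+3)) == fspan F)%MS.
Proof. by rewrite /lagr mulmx1; apply/andP; split; exact: submx_refl. Qed.

Definition Lxi := col_mx (e1 F + f3 F) (col_mx (e3 F + f1 F) (f2 F)).

Lemma LxiE : Lxi = \matrix_(i,j) (if ((i == 0%N :> nat) && ((j == 0%N :> nat) || (j == 3%N :> nat)))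
   || ((i == 1%N :> nat) && ((j == 2%N :> nat) || (j == 5%N :> nat))) || ((i == 2%N :> nat) && (j == 4%N :> nat)) then 1 else 0).
Proof.
rewrite /Lxi /e1 /e3 /f1 /f2 /f3 !bvE //.
apply/matrixP => i j; rewrite (@col_mx_nat _ 0 1) (@col_mx_nat _ 0 0) !mxE; ordc i; ordc j;
  rewrite /= ?inordK // ?mxE /=; try ring.
Qed.

Definition Pm : 'M[F]_3 := \matrix_(i,j) if ((i == 0%N :> nat) && (j == 1%N :> nat)) || ((i == 1%N :> nat) && (j == 2%N :> nat)) || ((i == 2%N :> nat) && (j == 0%N :> nat)) then 1 else 0.

Lemma fxiL : fspan F *m xi F = Pm *m Lxi.
Proof. rewrite fspanE xiE LxiE /mkm; brute. Qed.
Lemma Lfxi : Lxi = Pm^T *m (fspan F *m xi F).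
Proof. rewrite fspanE xiE LxiE /mkm; brute. Qed.

Lemma lagrxi : (lagr (xi F) == col_mx (e1 F + f3 F) (col_mx (e3 F + f1 F) (f2 F)))%MS.
Proof.
rewrite /lagr -/Lxi; apply/andP; split; apply/submxP.
  by exists Pm; exact: fxiL.
by exists Pm^T; exact: Lfxi.
Qed.

Lemma dliota (A : 'M[F]_2) (h : 'M[F]_(2+2)) : dlsubmx (Defs.iota A h) =
  \matrix_(i,j) (if (i == 2%N :> nat) && (j == 0%N :> nat) then ent A 1 0 else
     if (i < 2)%N && (0 < j)%N then ent h (i+2) (j-1) else 0).
Proof. brute. Qed.

Lemma dlh (h : 'M[F]_(2+2)) : dlsubmx h = \matrix_(i,j) ent h (i+2) j.
Proof. brute. Qed.

Lemma A10 (A : 'M[F]_2) : A 1 0 = ent A 1 0.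
Proof. by rewrite entE. Qed.

Lemma stab1 (A : 'M[F]_2) (h : 'M[F]_(2+2)) : inSL2 A -> inSp h ->
  (stabilizes 1%:M A h <-> inBorel A /\ inSiegel h).
Proof.
move=> hA hh; split.
- case=> p [Sp_p dl_p]; rewrite mul1mx mulmx1 => e.
  rewrite -e dliota in dl_p; move/matrixP: dl_p => H.
  split; split => //.
    by have := H (inord 2) (inord 0); rewrite !mxE !inordK //= A10.
  apply/matrixP => i j; move: (H (inord i) (inord j.+1)); rewrite dlh !mxE; ordc i; ordc j;
    rewrite !inordK //= => hh'; exact: hh'.
- case=> [[_ a10] [_ dlh0]].
  have hz : forall i j : nat, (i < 2)%N -> (j < 2)%N -> ent h (i+2) j = 0.
    move=> i j hi hj; move/matrixP: dlh0 => D.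
    by have := D (inord i) (inord j); rewrite dlh !mxE !inordK.
  exists (Defs.iota A h); last by rewrite mul1mx mulmx1.
  split; first exact: Sp_iota.
  rewrite dliota; apply/matrixP => i j; rewrite !mxE; ordc i; ordc j; rewrite /= -?A10 //.
  all: by apply: hz.
Qed.

End S.

Section S.
Variable F : fieldType.
Local Notation J1 := (Jmx F 1).
Local Notation J2 := (Jmx F 2).
Local Notation J3 := (Jmx F 3).

Lemma mlevE (al : F) (A : 'M[F]_2) : mlev al A = \matrix_(i,j)
  match (i : nat), (j : nat) with
    | 0, 0 => al
    | 1, 1 => ent A 1 1
    | 1, 2 => ent A 1 0
    | 2, 1 => ent A 0 1
    | 2, 2 => ent A 0 0
    | 3, 3 => al^-1
    | _, _ => 0
    end.
Proof. apply/matrixP => i j; rewrite !mxE; ordc i; ordc j; rewrite /= ?entE //. Qed.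

Lemma U12_of (u : 'M[F]_(2+2)) : inSp u ->
  ent u 1 0 = 0 -> ent u 2 0 = 0 -> ent u 3 0 = 0 -> ent u 2 1 = 0 -> ent u 3 1 = 0 -> ent u 3 2 = 0 ->
  ent u 0 0 = 1 -> ent u 1 1 = 1 -> ent u 2 2 = 1 -> ent u 3 3 = 1 -> ent u 1 2 = 0 -> inU12 u.
Proof.
move=> hS h10 h20 h30 h21 h31 h32 h00 h11 h22 h33 h12.
split => //; split => // i j; rewrite (entE u i j) -val_eqE.
ordc i; ordc j; rewrite /=; split => //.
Qed.

Lemma U12_ent (u : 'M[F]_(2+2)) : inU12 u ->
  (ent u 1 0 = 0 /\ ent u 2 0 = 0 /\ ent u 3 0 = 0 /\ ent u 2 1 = 0 /\ ent u 3 1 = 0 /\ ent u 3 2 = 0) /\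
  (ent u 1 1 = 1 /\ ent u 2 2 = 1 /\ ent u 3 3 = 1 /\ ent u 1 2 = 0).
Proof.
case=> _ [H h12].
have L : forall a b, (b < a)%N -> (a < 4)%N -> ent u a b = 0.
  move=> a b ba a4; rewrite /ent; apply: (H _ _).2; rewrite !inordK //; lia.
have D : forall a, (a < 4)%N -> ent u a a = 1.
  move=> a a4; rewrite /ent; apply: (H _ _).1; by rewrite eqxx.
do !split; first [by apply: L | by apply: D | by []].
Qed.

Definition Ymx (al : F) (A : 'M[F]_2) (u : 'M[F]_(2+2)) : 'M[F]_3 := \matrix_(i,j)
  match (i : nat), (j : nat) with
  | 0, 0 => ent A 1 1
  | 0, 1 => ent A 1 1 * ent u 1 3 + ent A 1 0 * ent u 2 3
  | 0, 2 => ent A 1 0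
  | 1, 1 => al^-1
  | 2, 0 => ent A 0 1
  | 2, 1 => ent A 0 1 * ent u 1 3 + ent A 0 0 * ent u 2 3
  | 2, 2 => ent A 0 0
  | _, _ => 0
  end.

Lemma YC2 al A u : Ymx al A u *m C2 F = C2 F *m A.
Proof. brute. Qed.

Lemma YC4 al A u : inU12 u -> Ymx al A u *m C4 F = C4 F *m (mlev al A *m u).
Proof.
case/U12_ent => [[u10 [u20 [u30 [u21 [u31 u32]]]]] [u11 [u22 [u33 u12]]]].
rewrite mlevE.
let i := fresh "i" in let j := fresh "j" in
  apply/matrixP => i j; bigx;
  ordc i; ordc j; rewrite /= ?entE ?inordK //= ?u10 ?u20 ?u30 ?u21 ?u31 ?u32 ?u11 ?u22 ?u33 ?u12; try ring.
Qed.

Lemma stabxi_back (A : 'M[F]_2) (h : 'M[F]_(2+2)) : inSL2 A -> inSp h -> inSxi A h -> stabilizes (xi F) A h.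
Proof.
move=> hA hh [al [u [al0 _ hU eh]]].
have uxi := Sp_unit (J3J3 F) (xi_Sp F).
exists (xi F *m Defs.iota A h *m invmx (xi F)); last by rewrite mulmxKV.
split.
  exact: Sp_mul (Sp_mul (xi_Sp F) (Sp_iota hA hh)) (Sp_inv (J3J3 F) (xi_Sp F)).
apply/siegel_crit.
have e : fspan F *m xi F *m Defs.iota A h = Ymx al A u *m (fspan F *m xi F).
  by rewrite eh fsxi_iota fxi_dec mulmxDr !mulmxA YC2 (YC4 al A hU) !mulmxA.
by rewrite !mulmxA e mulmxA mulmxK // submxMl.
Qed.

End S.

Section S.
Variable F : fieldType.
Local Notation J1 := (Jmx F 1).
Local Notation J2 := (Jmx F 2).
Local Notation J3 := (Jmx F 3).

Lemma C4hE (h : 'M[F]_(2+2)) : C4 F *m h = \matrix_(i,j) ent h (if (i == 0%N :> nat) then 1%N else if (i == 1%N :> nat) then 3%N else 2%N) j.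
Proof. brute. Qed.
Lemma ZC4E (Z : 'M[F]_3) : Z *m C4 F = \matrix_(i,j) (if (j == 0%N :> nat) then 0 else if (j == 1%N :> nat) then ent Z i 0
   else if (j == 2%N :> nat) then ent Z i 2 else ent Z i 1).
Proof. brute. Qed.
Lemma C2AE (A : 'M[F]_2) : C2 F *m A = \matrix_(i,j) (if (i == 0%N :> nat) then ent A 1 j else if (i == 1%N :> nat) then 0 else ent A 0 j).
Proof. brute. Qed.
Lemma ZC2E (Z : 'M[F]_3) : Z *m C2 F = \matrix_(i,j) (if (j == 0%N :> nat) then ent Z i 2 else ent Z i 0).
Proof. brute. Qed.

Lemma stabxi_fwd (A : 'M[F]_2) (h : 'M[F]_(2+2)) : inSL2 A -> inSp h -> stabilizes (xi F) A h -> inSxi A h.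
Proof.
move=> hA hh [p [Sp_p dl_p] e].
have [Z hZ] : exists Z, fspan F *m p = Z *m fspan F by apply/submxP; apply/siegel_crit.
have e1 : C2 F *m A *m E2 F + C4 F *m h *m E4 F = Z *m (C2 F *m E2 F + C4 F *m E4 F).
  by rewrite -fsxi_iota -fxi_dec -mulmxA e mulmxA hZ mulmxA.
have E2eq : C2 F *m A = Z *m C2 F.
  have := congr1 (mulmx^~ (P2 F)) e1; rewrite /= mulmxDr !mulmxDl !mulmxA !(mE2P2, mE4P2) !addr0; exact.
have E4eq : C4 F *m h = Z *m C4 F.
  have := congr1 (mulmx^~ (P4 F)) e1; rewrite /= mulmxDr !mulmxDl !mulmxA !(mE2P4, mE4P4) !add0r; exact.
rewrite C2AE ZC2E in E2eq; move/matrixP: E2eq => E2.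
rewrite C4hE ZC4E in E4eq; move/matrixP: E4eq => E4.
have h10 : ent h 1 0 = 0 by move: (E4 (inord 0) (inord 0)); rewrite !mxE !inordK //= => ->.
have h20 : ent h 2 0 = 0 by move: (E4 (inord 2) (inord 0)); rewrite !mxE !inordK //= => ->.
have h30 : ent h 3 0 = 0 by move: (E4 (inord 1) (inord 0)); rewrite !mxE !inordK //= => ->.
have h11 : ent h 1 1 = ent A 1 1.
  by move: (E4 (inord 0) (inord 1)) (E2 (inord 0) (inord 1)); rewrite !mxE !inordK //= => -> ->.
have h12 : ent h 1 2 = ent A 1 0.
  by move: (E4 (inord 0) (inord 2)) (E2 (inord 0) (inord 0)); rewrite !mxE !inordK //= => -> ->.
have h31 : ent h 3 1 = 0.
  by move: (E4 (inord 1) (inord 1)) (E2 (inord 1) (inord 1)); rewrite !mxE !inordK //= => -> <-.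
have h32 : ent h 3 2 = 0.
  by move: (E4 (inord 1) (inord 2)) (E2 (inord 1) (inord 0)); rewrite !mxE !inordK //= => -> <-.
have h21 : ent h 2 1 = ent A 0 1.
  by move: (E4 (inord 2) (inord 1)) (E2 (inord 2) (inord 1)); rewrite !mxE !inordK //= => -> ->.
have h22 : ent h 2 2 = ent A 0 0.
  by move: (E4 (inord 2) (inord 2)) (E2 (inord 2) (inord 0)); rewrite !mxE !inordK //= => -> ->.
have hJ := (Sp_row _ (J2J2 F)).1 hh.
rewrite JmxM in hJ; move/matrixP: hJ => hJ.
have b33 : ent h 0 0 * ent h 3 3 = 1.
  move: (hJ (inord 0) (inord 3)); bigx; rewrite ?entE /= ?inordK //= h30 h31 h32 => <-; ring.
have al0 : ent h 0 0 != 0.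
  by apply/eqP => a0; move: b33; rewrite a0 mul0r => /eqP; rewrite eq_sym oner_eq0.
have hdet : ent A 0 0 * ent A 1 1 - ent A 0 1 * ent A 1 0 = 1 by rewrite -det2.
have hinv : (ent h 0 0)^-1 * (ent h 0 0) = 1 by rewrite mulVf.
pose N : 'M[F]_(2+2) := \matrix_(i,j) match (i : nat), (j : nat) with
   | 0, 0 => (ent h 0 0)^-1 | 1, 1 => ent A 0 0 | 1, 2 => - ent A 1 0 | 2, 1 => - ent A 0 1
   | 2, 2 => ent A 1 1 | 3, 3 => (ent h 0 0) | _, _ => 0 end.
have mN : mlev (ent h 0 0) A *m N = 1%:M.
  rewrite mlevE; apply/matrixP => i j; bigx; ordc i; ordc j; rewrite /= ?entE ?inordK //=;
  first [ring | (transitivity (ent A 0 0 * ent A 1 1 - ent A 0 1 * ent A 1 0); [ring | exact hdet])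
              | (transitivity ((ent h 0 0)^-1 * (ent h 0 0)); [ring | exact hinv]) ].
have NSp : inSp N.
  apply/(Sp_row _ (J2J2 F)); rewrite JmxM; apply/matrixP => i j; bigx; ordc i; ordc j; rewrite /= ?entE ?inordK //=;
  first [ring | (transitivity (ent A 0 0 * ent A 1 1 - ent A 0 1 * ent A 1 0); [ring | exact hdet])
              | (transitivity (- (ent A 0 0 * ent A 1 1 - ent A 0 1 * ent A 1 0)); [ring | by rewrite hdet])
              | (transitivity ((ent h 0 0)^-1 * (ent h 0 0)); [ring | exact hinv])
              | (transitivity (- ((ent h 0 0)^-1 * (ent h 0 0))); [ring | by rewrite hinv]) ].
exists (ent h 0 0), (N *m h); split => //; last by rewrite mulmxA mN mul1mx.
apply: U12_of; first exact: Sp_mul NSp hh.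
all: rewrite /ent; bigx; rewrite ?entE /= ?inordK //= ?h10 ?h20 ?h30 ?h11 ?h12 ?h31 ?h32 ?h21 ?h22;
  first [ring | (transitivity (ent A 0 0 * ent A 1 1 - ent A 0 1 * ent A 1 0); [ring | exact hdet])
              | (transitivity ((ent h 0 0)^-1 * (ent h 0 0)); [ring | exact hinv])
              | (transitivity (ent h 0 0 * ent h 3 3); [ring | exact b33]) ].
Qed.

End S.


Unset Implicit Arguments.

(* F a number field = finite-dimensional field extension of Q *)
Theorem lemma5p1 (F : fieldExtType rat) :
  inSp (xi F) /\
  (* the double coset space has exactly the two elements I_6 and xi *)
  (forall g : 'M[F]_(3 + 3), inSp g -> inDC 1%:M g \/ inDC (xi F) g) /\
  ~ inDC 1%:M (xi F) /\
  (* (1) *)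
  (lagr 1%:M == fspan F)%MS /\
  (forall (A : 'M[F]_2) (h : 'M[F]_(2 + 2)), inSL2 A -> inSp h ->
     (stabilizes 1%:M A h <-> inBorel A /\ inSiegel h)) /\
  (* (2) *)
  (lagr (xi F) == col_mx (e1 F + f3 F) (col_mx (e3 F + f1 F) (f2 F)))%MS /\
  (forall (A : 'M[F]_2) (h : 'M[F]_(2 + 2)), inSL2 A -> inSp h ->
     (stabilizes (xi F) A h <-> inSxi A h)).
Proof.
split; first exact: xi_Sp.
split; first exact: dc_main.
split; first exact: not_dc1xi.
split; first exact: lagr1.
split; first by move=> A h hA hh; exact: stab1.
split; first exact: lagrxi.
move=> A h hA hh; split; [exact: stabxi_fwd | exact: stabxi_back].
Qed.
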